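(* Let $M$ be a $3$-connected simple matroid with $r(M)\ge 4$, and let $K=x_1,\dots,x_n,y_1,\dots,y_n$ ($n\ge3$) be a carambole of $M$ with filament $L=\{y_1,\dots,y_n\}$ and hull $X=\{x_1,\dots,x_n\}$. Let $C$ be a circuit of $M$ with $C\not\subseteq L$. Then: (a) If $C$ meets $\{x_1,\dots,x_n,y_1,\dots,y_n\}$, then either (a.1) $X\subseteq C$ and $(C-L)\cup A$ is a circuit of $M$ for each $2$-element subset $A$ of $L$; or (a.2) for some $l\in\{1,\dots,n\}$, $X-C=\{x_l\}$, $(C-L)\cup y_l$ is a circuit of $M$, and $(C-L)\cup A$ is a circuit of $M$ for each $2$-element subset $A$ of $L-y_l$. (b) $C-L$ is a circuit of $M/L$.
   Context: A line of $M$ is a rank-$2$ set. For $n\ge3$, a sequence $x_1,\dots,x_n,y_1,\dots,y_n$ of elements of $M$ is a carambole of $M$ if $L:=\{y_1,\dots,y_n\}$ is a line of $M$ with $n$ distinct elements such that $\mathrm{si}(M/L)$ (the simplification) is $3$-connected, and, for each $i$, $(L-y_i)\cup x_i$ is a cocircuit of $M$. $L$ is the filament and $X:=\{x_1,\dots,x_n\}$ the hull of the carambole. *)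

(* Defs.v *)
From mathcomp Require Import all_boot.
Set Implicit Arguments. Unset Strict Implicit. Unset Printing Implicit Defensive.

Record matroid (E : finType) := Matroid {
  indep : {set E} -> bool;
  indep0 : indep set0;
  indep_sub : forall A B : {set E}, A \subset B -> indep B -> indep A;
  indep_aug : forall A B : {set E}, indep A -> indep B -> #|A| < #|B| ->
      exists2 e, e \in B :\: A & indep (e |: A)
}.

Section MatroidDefs.
Variables (E : finType) (M : matroid E).

Definition rank (X : {set E}) : nat :=
  \max_(Y : {set E} | (Y \subset X) && indep M Y) #|Y|.

Definition circuit (C : {set E}) : bool :=
  ~~ indep M C && [forall e in C, indep M (C :\ e)].

(* cocircuits = circuits of the dual: minimal sets D that are not coindependent,
   where D is coindependent iff r(E - D) = r(E). *)
Definition coindep (D : {set E}) : bool := rank (~: D) == rank setT.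
Definition cocircuit (D : {set E}) : bool :=
  ~~ coindep D && [forall e in D, coindep (D :\ e)].

(* Tutte 3-connectivity of the matroid on ground set S with rank function rk:
   no k-separation (A, S - A) for k = 1, 2, i.e. no A with |A|, |S - A| >= k and
   rk A + rk (S - A) - rk S < k. *)
Definition three_connected_rk (rk : {set E} -> nat) (S : {set E}) : Prop :=
  forall (A : {set E}) (k : nat), A \subset S -> 1 <= k < 3 ->
    ~ [/\ k <= #|A|, k <= #|S :\: A| & rk A + rk (S :\: A) < rk S + k].

Definition three_connected : Prop := three_connected_rk rank setT.

(* simple: no loops and no parallel pairs *)
Definition simple : Prop :=
  (forall e : E, indep M [set e]) /\ (forall e f : E, indep M [set e; f]).

Definition line (L : {set E}) : bool := rank L == 2.

(* contraction M/L, ground set E - L, rank r_{M/L}(X) = r(X u L) - r(L) *)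
Definition rank_con (L X : {set E}) : nat := rank (X :|: L) - rank L.
Definition indep_con (L X : {set E}) : bool :=
  (X \subset ~: L) && (rank (X :|: L) == #|X| + rank L).
Definition circuit_con (L C : {set E}) : bool :=
  (C \subset ~: L) && ~~ indep_con L C && [forall e in C, indep_con L (C :\ e)].

Definition loop_con (L : {set E}) (e : E) : bool := rank_con L [set e] == 0.
Definition parallel_con (L : {set E}) (e f : E) : bool :=
  [&& e != f, ~~ loop_con L e, ~~ loop_con L f & rank_con L [set e; f] == 1].

(* S is the ground set of a simplification of M/L: one representative of each
   parallel class of non-loops of M/L *)
Definition simplification_set (L S : {set E}) : Prop :=
  [/\ S \subset ~: L,
      forall e, e \in S -> ~~ loop_con L e,
      forall e f, e \in S -> f \in S -> ~~ parallel_con L e f &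
      forall e, e \in ~: L -> ~~ loop_con L e ->
        exists2 f, f \in S & (e == f) || parallel_con L e f].

(* si(M/L) is 3-connected (independent of the choice of representatives) *)
Definition si_con_three_connected (L : {set E}) : Prop :=
  exists S, simplification_set L S /\ three_connected_rk (rank_con L) S.

Definition carambole (n : nat) (x y : 'I_n -> E) : Prop :=
  let L := [set y i | i : 'I_n] in
  [/\ 3 <= n, injective y, line L, si_con_three_connected L &
      forall i : 'I_n, cocircuit ((L :\ y i) :|: [set x i])].

End MatroidDefs.

(* Main.v *)
Require Import Defs.
From mathcomp Require Import all_boot zify.
Set Implicit Arguments. Unset Strict Implicit. Unset Printing Implicit Defensive.

Section Rank.
Variables (E : finType) (M : matroid E).
Local Notation r := (rank M).
Local Notation ind := (indep M).

Lemma rank_ge (A Z : {set E}) : Z \subset A -> ind Z -> #|Z| <= r A.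
Proof. by move=> sYA iY; rewrite /rank; apply: (bigmax_sup Z) => //; rewrite sYA. Qed.

Lemma rank_wit (A : {set E}) : exists2 Y : {set E}, (Y \subset A) && ind Y & #|Y| = r A.
Proof.
have P0 : (set0 \subset A) && ind set0 by rewrite sub0set indep0.
rewrite /rank (bigmax_eq_arg set0 P0).
case: arg_maxnP => //= Y PY _; by exists Y.
Qed.

Lemma rank_le_card (A : {set E}) : r A <= #|A|.
Proof. apply/bigmax_leqP => Y /andP[sYA _]; exact: subset_leq_card. Qed.

Lemma rank_indep (A : {set E}) : ind A -> r A = #|A|.
Proof. by move=> iA; apply/eqP; rewrite eqn_leq rank_le_card rank_ge. Qed.

Lemma rank_eq_indep (A : {set E}) : r A = #|A| -> ind A.
Proof.
case: (rank_wit A) => Y /andP[sYA iY] <- eYA.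
by have /eqP <- : Y == A by rewrite eqEcard sYA eYA leqnn.
Qed.

Lemma rank_mono (A B : {set E}) : A \subset B -> r A <= r B.
Proof.
move=> sAB; case: (rank_wit A) => Y /andP[sYA iY] <-.
apply: rank_ge iY; exact: subset_trans sAB.
Qed.

Lemma indep_rank_lt (A Y : {set E}) : ind Y -> Y \subset A -> #|Y| < r A ->
  exists2 e, e \in A :\: Y & ind (e |: Y).
Proof.
move=> iY sYA lt; case: (rank_wit A) => Z /andP[sZA iZ] eZ.
rewrite -eZ in lt; case: (indep_aug iY iZ lt) => e.
rewrite inE => /andP[eY eZ'] ie; exists e => //; rewrite inE eY (subsetP sZA) //.
Qed.

Lemma extend (I B : {set E}) : ind I -> I \subset B ->
  exists J : {set E}, [/\ I \subset J, J \subset B, ind J & #|J| = r B].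
Proof.
move=> iI sIB; move Hk: (r B - #|I|) => k.
elim: k I iI sIB Hk => [|k IH] I iI sIB Hk.
  exists I; split => //; apply/eqP; rewrite eqn_leq rank_ge //=.
  by rewrite -subn_eq0 Hk.
have lt : #|I| < r B by rewrite -subn_gt0 Hk.
case: (indep_rank_lt iI sIB lt) => e; rewrite inE => /andP[eI eB] ie.
have [J [s1 s2 s3 s4]] : exists J : {set E}, [/\ e |: I \subset J, J \subset B, ind J & #|J| = r B].
  apply: IH => //; first by rewrite subUset sub1set eB sIB.
  by rewrite cardsU1 eI add1n subnS Hk.
exists J; split => //; exact: subset_trans (subsetUr _ _) s1.
Qed.

Lemma rank_add1 (A : {set E}) e : r (e |: A) <= (r A).+1.
Proof.
case: (rank_wit (e |: A)) => Y /andP[sY iY] <-.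
have : Y :\ e \subset A.
  apply/subsetP => z; rewrite !inE => /andP[ze zY].
  by move: (subsetP sY z zY); rewrite !inE (negPf ze).
move/rank_ge => /(_ (indep_sub (subsetDl _ _) iY)).
by rewrite (cardsD1 e Y) addnC; case: (e \in Y) => /= h; rewrite ?addn1 ?addn0 ?ltnS // ltnW.
Qed.

Lemma set_ind (P : {set E} -> Prop) : P set0 ->
  (forall (b : E) (B : {set E}), b \notin B -> P B -> P (b |: B)) -> forall B, P B.
Proof.
move=> P0 PS B; move Hk: #|B| => k; elim: k B Hk => [|k IH] B Hk.
  by move/eqP: Hk; rewrite cards_eq0 => /eqP ->.
have : 0 < #|B| by rewrite Hk.
case/card_gt0P => b bB; rewrite -(setD1K bB); apply: PS; first by rewrite !inE eqxx.
apply: IH; move: Hk; rewrite (cardsD1 b B) bB add1n; by case.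
Qed.

Lemma rank_geA (A B : {set E}) : A \subset B -> r A <= r B.
Proof. exact: rank_mono. Qed.

Lemma rank_add1_cases (A : {set E}) e : r (e |: A) = r A \/ r (e |: A) = (r A).+1.
Proof.
have h1 := rank_add1 A e; have h2 : r A <= r (e |: A) by apply: rank_mono; apply: subsetUr.
rewrite leq_eqVlt in h2; case/orP: h2 => [/eqP ->|lt]; [by left|right].
by apply/eqP; rewrite eqn_leq h1 lt.
Qed.

Lemma clos_mono (A B : {set E}) e : A \subset B -> r (e |: A) = r A -> r (e |: B) = r B.
Proof.
move=> sAB eA; case: (rank_add1_cases B e) => // eB; exfalso.
case: (rank_wit A) => I /andP[sIA iI] cI.
case: (extend iI (subset_trans sIA sAB)) => J [sIJ sJB iJ cJ].
have lt : #|J| < r (e |: B) by rewrite eB cJ.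
case: (indep_rank_lt iJ (subset_trans sJB (subsetUr _ _)) lt) => f.
rewrite !inE => /andP[fJ /orP[/eqP fe|fB]] iF.
  subst f.
  have ieI : ind (e |: I) by apply: indep_sub iF; apply: setUS.
  have eI : e \notin I by apply: contra fJ; apply: (subsetP sIJ).
  have := rank_ge (setUS [set e] sIA) ieI.
  by rewrite eA cardsU1 eI cI add1n ltnn.
have sfB : f |: J \subset B by rewrite subUset sub1set fB sJB.
have := rank_ge sfB iF.
by rewrite cardsU1 fJ cJ add1n ltnn.
Qed.

Lemma rank_union_le (A B : {set E}) : r (A :|: B) <= r A + #|B|.
Proof.
elim/set_ind: B => [|b B bB IH]; first by rewrite setU0 cards0 addn0.
rewrite setUCA cardsU1 bB add1n addnS; apply: leq_trans (rank_add1 _ _) _; by rewrite ltnS.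
Qed.

Lemma spanned (A B : {set E}) : (forall b, b \in B -> r (b |: A) = r A) -> r (A :|: B) = r A.
Proof.
elim/set_ind: B => [|b B bB IH] h; first by rewrite setU0.
rewrite setUCA (@clos_mono A) ?subsetUl //; last by apply: h; rewrite !inE eqxx.
apply: IH => c cB; apply: h; by rewrite !inE cB orbT.
Qed.

Lemma circuit_rank (C : {set E}) : circuit M C -> r C = #|C|.-1 /\ C != set0.
Proof.
case/andP => nC /forallP hC.
have C0 : C != set0 by apply: contraNneq nC => ->; apply: indep0.
case/set0Pn: (C0) => e eC; split => //.
have := implyP (hC e) eC => /rank_indep h.
have le := rank_le_card C; have ge := rank_mono (subsetDl C [set e]).
rewrite h (cardsD1 e C) eC add1n /= in ge *.
rewrite (cardsD1 e C) eC add1n /= in le.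
case: (ltngtP (r C) #|C :\ e|.+1) le => // eq _; last by move: nC; rewrite rank_eq_indep // (cardsD1 e C) eC.
by apply/eqP; rewrite eqn_leq ge -ltnS eq.
Qed.

Lemma coc (D Z : {set E}) e : cocircuit M D -> Z \subset ~: D -> e \in D ->
  r (e |: Z) = (r Z).+1.
Proof.
case/andP => nD /forallP hD sZ eD.
case: (rank_add1_cases Z e) => // eq; exfalso.
have := clos_mono sZ eq.
have -> : e |: ~: D = ~: (D :\ e).
  by apply/setP => z; rewrite !inE; case: (z == e).
move: (implyP (hD e) eD); rewrite /coindep => /eqP ->.
move=> h; move/negP: nD; apply; rewrite /coindep.
by rewrite h.
Qed.

Lemma circ_cocirc (C D : {set E}) e : circuit M C -> cocircuit M D -> C :&: D = [set e] -> False.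
Proof.
move=> cC cD CD.
have : e \in C :&: D by rewrite CD set11.
rewrite inE => /andP[eC eD].
have sZ : C :\ e \subset ~: D.
  apply/subsetP => z; rewrite !inE => /andP[ze zC]; apply/negP => zD.
  have : z \in C :&: D by rewrite inE zC zD.
  by rewrite CD inE (negPf ze).
have := coc cD sZ eD; rewrite setD1K //.
case: (circuit_rank cC) => -> _.
case/andP: cC => _ /forallP/(_ e)/implyP/(_ eC)/rank_indep ->.
by rewrite (cardsD1 e C) eC add1n /= => /eqP; rewrite -[X in X == _]addn0 -addn1 eqn_add2l.
Qed.
End Rank.

Ltac sb := apply/setP => ?; rewrite !inE; repeat (case: (_ == _)); repeat (case: (_ \in _)); by [].

Lemma card2U (T : finType) (Z : {set T}) u v : u != v -> u \notin Z -> v \notin Z ->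
  #|Z :|: [set u; v]| = #|Z|.+2.
Proof.
move=> uv uZ vZ.
rewrite setUA setUC cardsU1 [Z :|: _]setUC cardsU1 !inE (negPf uZ) (negPf vZ) /=.
by rewrite eq_sym (negPf uv).
Qed.

Section Car.
Variables (E : finType) (M : matroid E) (n : nat) (x y : 'I_n -> E).
Local Notation r := (rank M).
Local Notation ind := (indep M).
Local Notation L := [set y i | i : 'I_n].
Local Notation D i := ((L :\ y i) :|: [set x i]).
Hypotheses (yinj : injective y) (rL : r L = 2) (xnL : forall i, x i \notin L)
  (n2 : 2 <= n) (Dc : forall i, cocircuit M (D i))
  (r2 : forall a b, a != b -> r [set y a; y b] = 2).

Lemma other (i : 'I_n) : exists j, j != i.
Proof.
have : 0 < #|[set~ i]| by rewrite cardsC1 card_ord -ltnS prednK // (leq_trans _ n2).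
by case/card_gt0P => j; rewrite !inE => h; exists j.
Qed.

Lemma yL i : y i \in L.
Proof. exact: imset_f. Qed.

Lemma yD i j : (y j \in D i) = (j != i).
Proof.
rewrite !inE yL andbT (inj_eq yinj).
case: (eqVneq (y j) (x i)) => [e|]; last by rewrite orbF.
by have := xnL i; rewrite -e yL.
Qed.

Lemma xD i : x i \in D i.
Proof. by rewrite !inE eqxx orbT. Qed.

Lemma span (Z : {set E}) a b : a != b -> r (Z :|: L) = r (Z :|: [set y a; y b]).
Proof.
move=> ab.
have sL : [set y a; y b] \subset L by rewrite subUset !sub1set !yL.
have -> : Z :|: L = (Z :|: [set y a; y b]) :|: L.
  by rewrite -setUA (setUidPr sL).
apply: spanned => z zL; apply: (@clos_mono _ _ [set y a; y b]); first exact: subsetUr.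
apply/eqP; rewrite eqn_leq; apply/andP; split; last by apply: rank_mono; apply: subsetUr.
by rewrite r2 // -rL; apply: rank_mono; rewrite subUset sub1set zL sL.
Qed.

Lemma TP (Z : {set E}) a b : a != b -> Z \subset ~: D a -> Z \subset ~: D b ->
  r (Z :|: [set y a; y b]) = (r Z).+2.
Proof.
move=> ab Za Zb.
have -> : Z :|: [set y a; y b] = y b |: (y a |: Z).
  by sb.
rewrite (@coc _ _ (D a)) //; last by rewrite yD eq_sym.
rewrite (@coc _ _ (D b)) //; last by rewrite yD.
rewrite subUset sub1set Za andbT inE yD eqxx //.
Qed.

Variable C' : {set E}.
Hypotheses (iC : ind C') (CL : C' \subset ~: L) (F2 : r (C' :|: L) = #|C'|.+1)
  (F3 : forall e, e \in C' -> r ((C' :\ e) :|: L) = #|C'|.+1).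

Lemma yC i : y i \notin C'.
Proof. by apply/negP => /(subsetP CL); rewrite inE yL. Qed.

Lemma rC : r C' = #|C'|.
Proof. exact: rank_indep. Qed.

Lemma val i : r (y i |: C') = #|C'| \/ r (y i |: C') = #|C'|.+1.
Proof. by rewrite -rC; apply: rank_add1_cases. Qed.

Lemma U a b : a != b -> r (y a |: C') = #|C'| -> r (y b |: C') = #|C'| -> False.
Proof.
move=> ab ha hb.
have := F2; rewrite (span _ ab).
have -> : C' :|: [set y a; y b] = y b |: (y a |: C').
  by sb.
have h : r (y b |: (y a |: C')) = r (y a |: C').
  by apply: (@clos_mono _ _ C'); [exact: subsetUr | by rewrite hb rC].
rewrite h ha.
lia.
Qed.

Lemma CA a b : a != b -> r (y a |: C') = #|C'|.+1 -> r (y b |: C') = #|C'|.+1 ->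
  circuit M (C' :|: [set y a; y b]).
Proof.
move=> ab ha hb.
have yab : y a != y b by rewrite (inj_eq yinj).
have card : #|C' :|: [set y a; y b]| = #|C'|.+2.
  rewrite setUA setUC cardsU1 [C' :|: _]setUC cardsU1 !inE (negPf (yC a)) (negPf (yC b)) /=.
  by rewrite eq_sym (negPf yab).
apply/andP; split.
  apply/negP => /rank_indep; rewrite -(span _ ab) F2 card.
  lia.
apply/forallP => e; apply/implyP; rewrite !inE => /orP[eC|/orP[/eqP ea|/eqP eb]].
- apply: rank_eq_indep.
  have -> : (C' :|: [set y a; y b]) :\ e = (C' :\ e) :|: [set y a; y b].
    have ea' : e != y a by apply: contraNneq (yC a) => <-.
    have eb' : e != y b by apply: contraNneq (yC b) => <-.
    apply/setP => z; rewrite !inE; case: (eqVneq z e) => [->|_] /=; last by [].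
    by rewrite (negPf ea') (negPf eb').
  have yC' : forall i, y i \notin C' :\ e by move=> i; apply: contra (yC i); apply/subsetP/subsetDl.
  rewrite -(span _ ab) F3 // card2U // (cardsD1 e C') eC add1n //.
- apply: rank_eq_indep; subst e.
  have -> : (C' :|: [set y a; y b]) :\ y a = y b |: C'.
    apply/setP => z; rewrite !inE; case: (eqVneq z (y a)) => [->|_] /=.
      by rewrite (negPf (yC a)) (negPf yab).
    by rewrite orbC.
  by rewrite hb cardsU1 (negPf (yC b)).
- apply: rank_eq_indep; subst e.
  have -> : (C' :|: [set y a; y b]) :\ y b = y a |: C'.
    apply/setP => z; rewrite !inE; case: (eqVneq z (y b)) => [->|_] /=.
      by rewrite (negPf (yC b)) eq_sym (negPf yab).
    by rewrite orbF orbC.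
  by rewrite ha cardsU1 (negPf (yC a)).
Qed.

Lemma H e b : e \in C' -> #|C'| <= r (y b |: (C' :\ e)).
Proof.
move=> eC; case: (other b) => j jb.
have := F3 eC; rewrite (span _ (_ : b != j)); last by rewrite eq_sym.
have -> : (C' :\ e) :|: [set y b; y j] = y j |: (y b |: (C' :\ e)) by sb.
move=> h; have := rank_add1 M (y b |: (C' :\ e)) (y j); rewrite h; lia.
Qed.

Lemma Circ1 c : r (y c |: C') = #|C'| -> circuit M (y c |: C').
Proof.
move=> hc; apply/andP; split.
  apply/negP => /rank_indep; rewrite hc cardsU1 (negPf (yC c)); lia.
apply/forallP => e; apply/implyP; rewrite in_setU1 => /orP[/eqP ->|eC].
  by rewrite setU1K // yC.
have ec : e != y c by apply: contraNneq (yC c) => <-.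
have -> : (y c |: C') :\ e = y c |: (C' :\ e).
  apply/setP => z; rewrite !inE; case: (eqVneq z e) => [->|_] /=; last by [].
  by rewrite (negPf ec).
apply: rank_eq_indep; apply/eqP; rewrite eqn_leq rank_le_card /=.
have yC' : y c \notin C' :\ e by apply: contra (yC c); apply/subsetP/subsetDl.
have Hc := H c eC; move: Hc; rewrite cardsU1 yC' (cardsD1 e C') eC /=; lia.
Qed.

Lemma nL z : z \in C' -> z \notin L.
Proof. by move/(subsetP CL); rewrite inE. Qed.

Lemma XC c : r (y c |: C') = #|C'| -> x c \notin C'.
Proof.
move=> hc; apply/negP => xC.
have sZ : y c |: (C' :\ x c) \subset ~: D c.
  apply/subsetP => z; rewrite !inE => /orP[/eqP ->|/andP[zx zC]].
    by rewrite eqxx /=; apply/negP => /eqP e; have := xnL c; rewrite -e yL.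
  by rewrite (negPf (nL zC)) andbF (negPf zx).
have := coc (Dc c) sZ (xD c).
have -> : x c |: (y c |: (C' :\ x c)) = y c |: C'.
  apply/setP => z; rewrite !inE; case: (eqVneq z (x c)) => [->|_] /=; last by [].
  by rewrite xC orbT.
rewrite hc => e; have := H c xC; lia.
Qed.

Lemma G i : x i \notin C' -> r (y i |: C') = #|C'|.
Proof.
move=> xC; case: (other i) => a ai.
have sZ : y i |: C' \subset ~: D i.
  apply/subsetP => z; rewrite in_setU1 => /orP[/eqP ->|zC]; first by rewrite inE yD eqxx.
  rewrite !inE (negPf (nL zC)) andbF /=; apply/negP => /eqP ez; move: xC; by rewrite -ez zC.
have := coc (Dc i) sZ (_ : y a \in D i); rewrite yD ai => /(_ isT).
have -> : y a |: (y i |: C') = C' :|: [set y a; y i] by sb.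
rewrite -(span _ ai) F2; lia.
Qed.

Lemma two_sub (A : {set E}) : A \subset L -> #|A| = 2 ->
  exists a b, [/\ a != b, A = [set y a; y b], y a \in A & y b \in A].
Proof.
move=> sA /eqP /cards2P [u [v [uv eA]]].
have : u \in L by apply: (subsetP sA); rewrite eA !inE eqxx.
case/imsetP => a _ ua.
have : v \in L by apply: (subsetP sA); rewrite eA !inE eqxx orbT.
case/imsetP => b _ vb.
exists a, b; subst u v; split => //; last by rewrite eA !inE eqxx ?orbT.
  by apply: contraNneq uv => ->.
by rewrite eA !inE eqxx.
Qed.

Lemma partA (C : {set E}) : C :\: L = C' ->
  let X := [set x i | i : 'I_n] in
  (X \subset C /\ forall A : {set E}, A \subset L -> #|A| = 2 -> circuit M (C' :|: A))
  \/ (exists l : 'I_n, [/\ X :\: C = [set x l], circuit M (C' :|: [set y l]) &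
        forall A : {set E}, A \subset L :\ y l -> #|A| = 2 -> circuit M (C' :|: A)]).
Proof.
move=> eC X.
have xCC : forall i, (x i \in C') = (x i \in C) by move=> i; rewrite -eC inE (negPf (xnL i)).
have v1 : forall i, r (y i |: C') != #|C'| -> r (y i |: C') = #|C'|.+1.
  by move=> i; case: (val i) => ->; rewrite ?eqxx.
case: (pickP (fun c => r (y c |: C') == #|C'|)) => [c /eqP hc|none].
- right; exists c; split.
  + apply/setP => z; rewrite !inE; apply/andP/eqP => [[zC /imsetP[i _ zi]]|->].
      subst z; case: (eqVneq i c) => [->//|ic].
      have xi : x i \notin C' by rewrite xCC.
      by case: (U ic (G xi) hc).
    by rewrite imset_f // -xCC XC.
  + by rewrite setUC; apply: Circ1.
  + move=> A sA cA.
    have sAL : A \subset L by apply: subset_trans sA (subsetDl _ _).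
    case: (two_sub sAL cA) => a [b [ab eA ya yb]]; rewrite eA.
    have nc : forall i, y i \in A -> i != c.
      move=> i yi; apply/negP => /eqP ic; subst i.
      by move: (subsetP sA _ yi); rewrite !inE eqxx.
    apply: CA => //; apply: v1; apply/negP => /eqP h.
      by apply: (U (nc a ya) h hc).
    by apply: (U (nc b yb) h hc).
- left; split.
  + apply/subsetP => z /imsetP[i _ ->]; rewrite -xCC.
    apply/negP => /negP xi; by move: (none i); rewrite (G xi) eqxx.
  + move=> A sA cA; case: (two_sub sA cA) => a [b [ab eA _ _]]; rewrite eA.
    by apply: CA => //; apply: v1; rewrite none.
Qed.

End Car.

Lemma b_from (E : finType) (M : matroid E) (L C' : {set E}) : rank M L = 2 ->
  C' \subset ~: L -> C' != set0 -> rank M (C' :|: L) <= #|C'|.+1 ->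
  (forall e, e \in C' -> #|C'|.+1 <= rank M ((C' :\ e) :|: L)) ->
  [/\ circuit_con M L C', rank M (C' :|: L) = #|C'|.+1 &
     forall e, e \in C' -> rank M ((C' :\ e) :|: L) = #|C'|.+1].
Proof.
move=> rL CL C0 up lo.
have F3 : forall e, e \in C' -> rank M ((C' :\ e) :|: L) = #|C'|.+1.
  move=> e eC; apply/eqP; rewrite eqn_leq lo // andbT; apply: leq_trans up.
  by apply: rank_mono; apply: setSU; apply: subsetDl.
have F2 : rank M (C' :|: L) = #|C'|.+1.
  case/set0Pn: C0 => e eC; apply/eqP; rewrite eqn_leq up /= -(F3 e eC).
  by apply: rank_mono; apply: setSU; apply: subsetDl.
split => //; apply/andP; split; first (apply/andP; split => //).
  by rewrite /indep_con CL F2 rL /=; apply/eqP; lia.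
apply/forallP => e; apply/implyP => eC; rewrite /indep_con.
rewrite (subset_trans (subsetDl _ _) CL) F3 // rL (cardsD1 e C') eC /=.
by apply/eqP; lia.
Qed.

Unset Implicit Arguments.

Theorem proposition4p2 (E : finType) (M : matroid E) (n : nat) (x y : 'I_n -> E)
  (C : {set E}) :
  three_connected M -> simple M -> 4 <= rank M setT ->
  carambole M x y ->
  let L := [set y i | i : 'I_n] in
  let X := [set x i | i : 'I_n] in
  circuit M C -> ~~ (C \subset L) ->
  ( (C :&: (X :|: L) != set0) ->
      ( (X \subset C /\
         forall A : {set E}, A \subset L -> #|A| = 2 -> circuit M ((C :\: L) :|: A))
      \/
        (exists l : 'I_n,
          [/\ X :\: C = [set x l],
              circuit M ((C :\: L) :|: [set y l]) &
              forall A : {set E}, A \subset L :\ y l -> #|A| = 2 ->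
                circuit M ((C :\: L) :|: A)]) ) )
  /\ circuit_con M L (C :\: L).
Proof.
move=> H3 [Hs1 Hs2] Hr4 [n3 yinj Lline Hsi Hcoc] L X cC nCL.
have rL : rank M L = 2 by apply/eqP.
have n2 : 2 <= n by apply: ltnW.
have r2 : forall a b, a != b -> rank M [set y a; y b] = 2.
  by move=> a b ab; rewrite rank_indep // cards2 (inj_eq yinj) ab.
have yL : forall i, y i \in L by move=> i; apply: imset_f.
have rEL : rank M (~: L) = rank M setT.
  have cL : #|L| = n by rewrite card_imset // card_ord.
  have cEL : 2 <= #|~: L|.
    by have := rank_union_le M L (~: L); rewrite setUCr rL; lia.
  have := H3 L 2 (subsetT L) isT; rewrite setTD => h.
  apply/eqP; rewrite eqn_leq rank_mono ?subsetT //=.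
  case: (leqP (rank M setT) (rank M (~:L))) => // lt; exfalso; apply: h; split; lia.
have xnL : forall i, x i \notin L.
  move=> i; apply/negP => xL; have := Hcoc i; case/andP => /negP nD _; apply: nD; rewrite /coindep.
  apply/eqP; apply/eqP; rewrite eqn_leq rank_mono ?subsetT //= -rEL; apply: rank_mono.
  by rewrite setCS subUset sub1set xL subsetDl.
have yD : forall i j, (y j \in (L :\ y i) :|: [set x i]) = (j != i).
  move=> i j; rewrite !inE yL andbT (inj_eq yinj).
  case: (eqVneq (y j) (x i)) => [e|]; last by rewrite orbF.
  by have := xnL i; rewrite -e yL.
set C' := C :\: L.
case/subsetPn: nCL => e0 e0C e0L.
have e0C' : e0 \in C' by rewrite inE e0L.
have C'0 : C' != set0 by apply/set0Pn; exists e0.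
have CL : C' \subset ~: L by apply/subsetP => z; rewrite !inE => /andP[].
have indsub : forall Z : {set E}, Z \subset C :\ e0 -> indep M Z.
  move=> Z sZ; apply: (@indep_sub _ M _ _ sZ); case/andP: cC => _ /forallP/(_ e0)/implyP; exact.
have kle : #|C :&: L| <= 2.
  have sCL : C :&: L \subset C :\ e0.
    apply/subsetP => z; rewrite !inE => /andP[zC zL]; rewrite zC andbT.
    by apply: contraNneq e0L => <-.
  rewrite -rL -(rank_indep (indsub _ sCL)); apply: rank_mono; exact: subsetIr.
have cC' : #|C| = #|C :&: L| + #|C'| by rewrite cardsID.
have [rC C0] := circuit_rank cC.
have iCe : forall e, e \in C -> indep M (C :\ e).
  by move=> e eC; case/andP: cC => _ /forallP/(_ e)/implyP; apply.
have cpos : 0 < #|C| by rewrite card_gt0.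
have k0x : C :&: L = set0 -> forall i, x i \notin C.
  move=> CL0 i; apply/negP => xC; apply: (circ_cocirc cC (Hcoc i) (e:=x i)).
  apply/setP => z; rewrite !inE; case: (eqVneq z (x i)) => [->|zx].
    by rewrite xC orbT.
  rewrite orbF; apply/negP => /andP[zC /andP[_ zL]].
  have : z \in C :&: L by rewrite inE zC zL.
  by rewrite CL0 inE.
have [up lo] : rank M (C' :|: L) <= #|C'|.+1 /\
    (forall e, e \in C' -> #|C'|.+1 <= rank M ((C' :\ e) :|: L)).
  have : #|C :&: L| = 0 \/ #|C :&: L| = 1 \/ #|C :&: L| = 2 by lia.
  case => [k0|[k1|k2]].
  - have CL0 : C :&: L = set0 by apply/eqP; rewrite -cards_eq0 k0.
    have eC : C' = C.
      apply/setP => z; rewrite inE; case zC: (z \in C); rewrite ?andbF ?andbT //.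
      apply/negP => zL; have : z \in C :&: L by rewrite inE zC zL.
      by rewrite CL0 inE.
    rewrite eC; pose i0 := Ordinal (ltnW n2); case: (other n2 i0) => j ji.
    have sD : forall i (Z : {set E}), Z \subset C -> Z \subset ~: ((L :\ y i) :|: [set x i]).
      move=> i Z sZ; apply/subsetP => z zZ; have zC := subsetP sZ z zZ.
      rewrite !inE; apply/negP => /orP[/andP[_ zL]|/eqP zx].
        have : z \in C :&: L by rewrite inE zC zL.
        by rewrite CL0 inE.
      by move: (k0x CL0 i); rewrite -zx zC.
    split.
      rewrite (span rL r2 _ ji); apply: leq_trans (rank_union_le _ _ _) _.
      rewrite cards2 (inj_eq yinj) ji rC; lia.
    move=> e eC'; rewrite (span rL r2 _ ji).
    rewrite (TP yinj xnL Hcoc ji (sD _ _ (subsetDl _ _)) (sD _ _ (subsetDl _ _))).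
    rewrite rank_indep ?iCe // (cardsD1 e C) eC'; lia.
  - case/cards1P: (introT eqP k1) => z Cz.
    have : z \in C :&: L by rewrite Cz set11.
    rewrite inE => /andP[zC /imsetP[m _ zm]]; subst z.
    have inCL : forall w, w \in C -> w \in L -> w = y m.
      move=> w wC wL; have : w \in C :&: L by rewrite inE wC wL.
      by rewrite Cz inE => /eqP.
    have xmC : x m \notin C.
      apply/negP => xC; apply: (circ_cocirc cC (Hcoc m) (e:=x m)).
      apply/setP => w; rewrite !inE; case: (eqVneq w (x m)) => [->|wx].
        by rewrite xC orbT.
      rewrite orbF; apply/negP => /andP[wC /andP[wy wL]].
      by move: wy; rewrite (inCL w wC wL) eqxx.
    have sDm : forall Z : {set E}, Z \subset C -> Z \subset ~: ((L :\ y m) :|: [set x m]).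
      move=> Z sZ; apply/subsetP => w wZ; have wC := subsetP sZ w wZ.
      rewrite !inE; apply/negP => /orP[/andP[wy wL]|/eqP wx].
        by move: wy; rewrite (inCL w wC wL) eqxx.
      by move: xmC; rewrite -wx wC.
    have eC : C' = C :\ y m.
      apply/setP => w; rewrite !inE; case wC: (w \in C); rewrite ?andbF ?andbT //.
      case wL: (w \in L) => /=.
        by rewrite (inCL w wC wL) eqxx.
      by apply/esym/negP => /eqP wy; move: wL; rewrite wy yL.
    have cardC : #|C| = #|C'|.+1 by rewrite cC' k1.
    case: (other n2 m) => j jm.
    have ymC : y m \in C := zC.
    split.
      rewrite (span rL r2 _ (_ : m != j)); last by rewrite eq_sym.
      have -> : C' :|: [set y m; y j] = y j |: C.
        apply/setP => w; rewrite eC !inE; case: (eqVneq w (y m)) => [->|wm] /=.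
          by rewrite ymC !orbT.
        by rewrite orbC.
      apply: leq_trans (rank_add1 _ _ _) _; rewrite rC cardC; lia.
    move=> e eC'.
    have em : e != y m by move: eC'; rewrite eC !inE => /andP[].
    have eCC : e \in C by move: eC'; rewrite !inE => /andP[].
    rewrite (span rL r2 _ (_ : m != j)); last by rewrite eq_sym.
    have -> : (C' :\ e) :|: [set y m; y j] = y j |: (C :\ e).
      apply/setP => w; rewrite eC !inE; case: (eqVneq w (y m)) => [->|wm] /=.
        by rewrite ymC (negPf (_ : y m != e)) ?orbT // eq_sym.
      by rewrite orbC.
    rewrite (coc (Hcoc m) (sDm _ (subsetDl _ _))) ?yD // rank_indep ?iCe //.
    by move: (cardsD1 e C); rewrite eCC cardC add1n => [[->]].
  - case/cards2P: (introT eqP k2) => u [v [uv Cuv]].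
    have : u \in C :&: L by rewrite Cuv !inE eqxx.
    rewrite inE => /andP[uC /imsetP[a _ ua]]; subst u.
    have : v \in C :&: L by rewrite Cuv !inE eqxx orbT.
    rewrite inE => /andP[vC /imsetP[b _ vb]]; subst v.
    have ab : a != b by apply: contraNneq uv => ->.
    have eCC : C = C' :|: [set y a; y b] by rewrite -Cuv setUC setID.
    have cardC : #|C| = #|C'|.+2 by rewrite cC' k2.
    split.
      rewrite (span rL r2 _ ab) -eCC rC cardC //.
    move=> e eC'.
    have eC : e \in C by move: eC'; rewrite !inE => /andP[].
    have eL : e \notin L by move: eC'; rewrite !inE => /andP[].
    rewrite (span rL r2 _ ab).
    have -> : (C' :\ e) :|: [set y a; y b] = C :\ e.
      rewrite {1}eCC; apply/setP => w; rewrite !inE.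
      case: (eqVneq w e) => [->|we] /=; last by [].
      by apply/negP => /orP[] /eqP ey; move: eL; rewrite ey yL.
    rewrite rank_indep ?iCe //.
    by move: (cardsD1 e C); rewrite eC cardC add1n => [[<-]].
case: (b_from rL CL C'0 up lo) => cc F2 F3; split => // meet.
have CLn : C :&: L != set0.
  apply: contra meet => /eqP CL0; apply/eqP/setP => w; rewrite !inE.
  apply/negP => /andP[wC /orP[/imsetP[i _ wi]|wL]].
    by move: (k0x CL0 i); rewrite -wi wC.
  have : w \in C :&: L by rewrite inE wC wL.
  by rewrite CL0 inE.
have iC' : indep M C'.
  case/set0Pn: CLn => z; rewrite inE => /andP[zC zL].
  apply: (@indep_sub _ M _ _ _ (iCe z zC)); apply/subsetP => w; rewrite !inE => /andP[wL wC].
  by rewrite wC andbT; apply: contraNneq wL => ->.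
exact: (partA yinj rL xnL n2 Hcoc r2 iC' CL F2 F3 (erefl _)).
Qed.
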